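(* Let $(V,[\cdot,\cdot,\cdot],[\cdot,\cdot])$ be a Bol algebra over a field of characteristic $0$ and $U(V)$ its universal enveloping algebra. If $a,b\in V$ satisfy $[a,b]=0$, then the commutator $[L_a,L_b]=L_aL_b-L_bL_a$ of left multiplication operators on $U(V)$ is a derivation of $U(V)$.
   Context: A (left) Bol algebra is a vector space $V$ with a skew-symmetric bilinear bracket $[\cdot,\cdot]$ and a trilinear bracket $[\cdot,\cdot,\cdot]$ satisfying $[a,a,b]=0$, $[a,b,c]+[b,c,a]+[c,a,b]=0$, $[x,y,[a,b,c]]=[[x,y,a],b,c]+[a,[x,y,b],c]+[a,b,[x,y,c]]$, and $[a,b,[x,y]]=[[a,b,x],y]+[x,[a,b,y]]+[x,y,[a,b]]+[[a,b],[x,y]]$. Its universal enveloping algebra $U(V)$ (in the sense of Pérez-Izquierdo) is a unital non-associative bialgebra (comultiplication $\Delta(x)=\sum x_{(1)}\otimes x_{(2)}$, counit $\epsilon$) generated as a unital algebra by $V\subseteq U(V)$, $V$ being its space of primitive elements, satisfying $\sum a_{(1)}(y(a_{(2)}z))=\sum (a_{(1)}(ya_{(2)}))z$ for all $a,y,z\in U(V)$; in particular $(a,y,z)=-(y,a,z)$ for $a\in V$, $y,z\in U(V)$, where $(x,y,z)=(xy)z-x(yz)$, and for $a,b,c\in V$: $[a,b]=ab-ba$, $[a,b,c]=a(bc)-b(ac)-c(ab)+c(ba)$. $L_x$ denotes left multiplication by $x$. *)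

(* Defs.v *)
From HB Require Import structures.
From mathcomp Require Import all_boot all_order all_algebra.
Set Implicit Arguments. Unset Strict Implicit. Unset Printing Implicit Defensive.
Import GRing.Theory.
Local Open Scope ring_scope.

Section BolDefs.
Variable K : fieldType.

Definition bilinear_map (A B C : lmodType K) (f : A -> B -> C) : Prop :=
  (forall (c : K) x x' y, f (c *: x + x') y = c *: f x y + f x' y) /\
  (forall (c : K) x y y', f x (c *: y + y') = c *: f x y + f x y').

Definition trilinear_map (A : lmodType K) (C : lmodType K) (f : A -> A -> A -> C) : Prop :=
  (forall (c : K) x x' y z, f (c *: x + x') y z = c *: f x y z + f x' y z) /\
  (forall (c : K) x y y' z, f x (c *: y + y') z = c *: f x y z + f x y' z) /\
  (forall (c : K) x y z z', f x y (c *: z + z') = c *: f x y z + f x y z').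

Definition linear_map (A B : lmodType K) (f : A -> B) : Prop :=
  forall (c : K) x y, f (c *: x + y) = c *: f x + f y.

Definition bol_algebra (V : lmodType K) (br2 : V -> V -> V)
    (br3 : V -> V -> V -> V) : Prop :=
  [/\ bilinear_map br2 /\ (forall a b, br2 a b = - br2 b a),
      trilinear_map br3,
      (forall a b, br3 a a b = 0) /\
      (forall a b c, br3 a b c + br3 b c a + br3 c a b = 0),
      (forall x y a b c,
          br3 x y (br3 a b c) =
          br3 (br3 x y a) b c + br3 a (br3 x y b) c + br3 a b (br3 x y c)) &
      (forall a b x y,
          br3 a b (br2 x y) =
          br2 (br3 a b x) y + br2 x (br3 a b y) + br3 x y (br2 a b)
          + br2 (br2 a b) (br2 x y))].

(* ---------- non-associative bialgebras ----------
   A comultiplication is represented by a function Delta : U -> seq (U * U)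
   giving, for each x, a finite representative  sum_i p_i (x) q_i  of Delta(x)
   in U (x) U.  Sweedler sums  sum f(x_(1), x_(2))  for a bilinear map f are
   the sums of f over this list.  All axioms are stated through such sums for
   arbitrary bilinear (resp. trilinear) maps, so they only depend on the
   tensor Delta(x), not on the representative. *)
Variable U : lmodType K.

Definition sweedler (Delta : U -> seq (U * U)) (f : U -> U -> U) (x : U) : U :=
  \sum_(pq <- Delta x) f pq.1 pq.2.

Definition sweedler3r (Delta : U -> seq (U * U)) (g : U -> U -> U -> U) (x : U) : U :=
  \sum_(pq <- Delta x) \sum_(rs <- Delta pq.2) g pq.1 rs.1 rs.2.

Definition sweedler3l (Delta : U -> seq (U * U)) (g : U -> U -> U -> U) (x : U) : U :=
  \sum_(pq <- Delta x) \sum_(rs <- Delta pq.1) g rs.1 rs.2 pq.2.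

(* x is primitive: Delta(x) = x (x) 1 + 1 (x) x *)
Definition primitive (Delta : U -> seq (U * U)) (one : U) (x : U) : Prop :=
  forall f : U -> U -> U, bilinear_map f -> sweedler Delta f x = f x one + f one x.

Definition nonassoc_bialgebra (mul : U -> U -> U) (one : U)
    (Delta : U -> seq (U * U)) (eps : U -> K) : Prop :=
  [/\ bilinear_map mul /\
      (forall x, mul one x = x /\ mul x one = x),
      (forall f, bilinear_map f -> forall (c : K) x y,
          sweedler Delta f (c *: x + y) = c *: sweedler Delta f x + sweedler Delta f y) /\
      (forall g, trilinear_map g -> forall x, sweedler3l Delta g x = sweedler3r Delta g x),
      linear_map (eps : U -> K^o) /\
      (forall x, sweedler Delta (fun p q => eps p *: q) x = x /\
                 sweedler Delta (fun p q => eps q *: p) x = x),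
      (forall f, bilinear_map f -> sweedler Delta f one = f one one) /\ eps one = 1 &
      (forall f, bilinear_map f -> forall x y,
          sweedler Delta f (mul x y) =
          \sum_(pq <- Delta x) \sum_(rs <- Delta y) f (mul pq.1 rs.1) (mul pq.2 rs.2)) /\
      (forall x y, eps (mul x y) = eps x * eps y)].

Inductive generated (V : lmodType K) (iota : V -> U) (mul : U -> U -> U) (one : U)
  : U -> Prop :=
  | gen_one : generated iota mul one one
  | gen_gen v : generated iota mul one (iota v)
  | gen_add x y : generated iota mul one x -> generated iota mul one y ->
                  generated iota mul one (x + y)
  | gen_scale (c : K) x : generated iota mul one x -> generated iota mul one (c *: x)
  | gen_mul x y : generated iota mul one x -> generated iota mul one y ->
                  generated iota mul one (mul x y).

(* The universal enveloping algebra U(V) of the Bol algebra V, described through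
   the properties listed in the paper: a unital non-associative bialgebra,
   generated as a unital algebra by V (embedded by the injective linear map
   iota), with V its space of primitive elements, the brackets of V being
   induced by the product of U, and satisfying
     sum a_(1) (y (a_(2) z)) = sum (a_(1) (y a_(2))) z. *)
Definition bol_enveloping (V : lmodType K) (br2 : V -> V -> V)
    (br3 : V -> V -> V -> V) (iota : V -> U) (mul : U -> U -> U) (one : U)
    (Delta : U -> seq (U * U)) (eps : U -> K) : Prop :=
  [/\ nonassoc_bialgebra mul one Delta eps,
      linear_map iota /\ injective iota,
      (forall x, primitive Delta one x <-> exists v, x = iota v) /\
      (forall x, generated iota mul one x),
      (forall a b, iota (br2 a b) = mul (iota a) (iota b) - mul (iota b) (iota a)) /\
      (forall a b c, iota (br3 a b c) =
          mul (iota a) (mul (iota b) (iota c)) - mul (iota b) (mul (iota a) (iota c))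
          - mul (iota c) (mul (iota a) (iota b)) + mul (iota c) (mul (iota b) (iota a))) &
      (forall a y z,
          sweedler Delta (fun p q => mul p (mul y (mul q z))) a =
          sweedler Delta (fun p q => mul (mul p (mul y q)) z) a)].

Definition derivation (mul : U -> U -> U) (D : U -> U) : Prop :=
  linear_map D /\ (forall x y, D (mul x y) = mul (D x) y + mul x (D y)).

End BolDefs.

(* Main.v *)
Require Import Defs.
From HB Require Import structures.
From mathcomp Require Import all_boot all_order all_algebra.
Import GRing.Theory.
Set Implicit Arguments. Unset Strict Implicit.
Set Bullet Behavior "Strict Subproofs".
Local Open Scope ring_scope.

Inductive trm := TAt of nat | TAdd of trm & trm | TOpp of trm | TZ.

Fixpoint teval (Z : zmodType) (e : seq Z) t : Z :=
  match t with
  | TAt n => nth 0 e n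
  | TAdd a b => teval e a + teval e b
  | TOpp a => - teval e a
  | TZ => 0
  end.

Fixpoint tcoef t (k : nat) : int :=
  match t with
  | TAt n => if k == n then 1 else 0
  | TAdd a b => tcoef a k + tcoef b k
  | TOpp a => - tcoef a k
  | TZ => 0
  end.

Lemma teval_sum (Z : zmodType) (e : seq Z) t :
  teval e t = \sum_(k < size e) nth 0 e k *~ tcoef t k.
Proof.
elim: t => [n|a iha b ihb|a iha|] /=.
- case: (ltnP n (size e)) => hn.
  + rewrite (bigD1 (Ordinal hn)) //= eqxx big1 ?addr0 //.
    move=> i hi; case: eqP => // hin; exfalso; move/eqP: hi; apply.
    by apply: val_inj.
  + rewrite nth_default // big1 // => i _.
    case: eqP => // hin; exfalso; have := ltn_ord i; rewrite hin => h; by move: hn; rewrite leqNgt h.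
- by rewrite iha ihb -big_split /=; apply: eq_bigr => i _; rewrite mulrzDr.
- by rewrite iha -sumrN; apply: eq_bigr => i _; rewrite mulrNz.
- by rewrite big1 // => i _; rewrite mulr0z.
Qed.

Lemma teval_eq (Z : zmodType) (e : seq Z) t1 t2 :
  all (fun k => tcoef t1 k == tcoef t2 k) (iota 0 (size e)) ->
  teval e t1 = teval e t2.
Proof.
move/allP=> H; rewrite !teval_sum; apply: eq_bigr => i _.
by rewrite (eqP (H i _)) // mem_iota /= add0n ltn_ord.
Qed.

Ltac mem_at x l :=
  match l with
  | nil => constr:(false)
  | (@id _ ?y) :: _ =>
      let _ := constr:(ltac:(unify x y; exact I) : True) in constr:(true)
  | _ :: ?r => mem_at x r
  end.

Ltac collect e l :=
  lazymatch e with
  | @GRing.add _ ?a ?b => let l1 := collect a l in collect b l1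
  | @GRing.opp _ ?a => collect a l
  | @GRing.zero _ => l
  | _ => let b := mem_at e l in
         lazymatch b with
         | true => l
         | false => constr:(@id _ e :: l)
         end
  end.

Ltac idx x l :=
  match l with
  | (@id _ ?y) :: _ =>
      let _ := constr:(ltac:(unify x y; exact I) : True) in constr:(0%N)
  | _ :: ?r => let n := idx x r in constr:(S n)
  end.

Ltac reify e l :=
  lazymatch e with
  | @GRing.add _ ?a ?b =>
      let ra := reify a l in let rb := reify b l in constr:(TAdd ra rb)
  | @GRing.opp _ ?a => let ra := reify a l in constr:(TOpp ra)
  | @GRing.zero _ => constr:(TZ)
  | _ => let n := idx e l in constr:(TAt n)
  end.

Ltac zsolve :=
  lazymatch goal with
  | |- @eq ?T ?L ?R =>
    let l0 := constr:(@nil T) in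
    let l1 := collect L l0 in
    let l := collect R l1 in
    let tl := reify L l in
    let tr := reify R l in
    change (teval l tl = teval l tr); apply: teval_eq; reflexivity
  end.

Section Bil.
Variables (K : fieldType) (A B C : lmodType K) (f : A -> B -> C).
Hypothesis hf : bilinear_map f.

Lemma fDl x x' y : f (x + x') y = f x y + f x' y.
Proof. by have := hf.1 1 x x' y; rewrite !scale1r. Qed.
Lemma fDr x y y' : f x (y + y') = f x y + f x y'.
Proof. by have := hf.2 1 x y y'; rewrite !scale1r. Qed.
Lemma f0l y : f 0 y = 0.
Proof.
have := fDl 0 0 y; rewrite addr0 => h.
by have := congr1 (fun t => t - f 0 y) h; rewrite subrr addrK.
Qed.
Lemma f0r x : f x 0 = 0.
Proof.
have := fDr x 0 0; rewrite addr0 => h.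
by have := congr1 (fun t => t - f x 0) h; rewrite subrr addrK.
Qed.
Lemma fNl x y : f (- x) y = - f x y.
Proof. by have := hf.1 (-1) x 0 y; rewrite addr0 f0l addr0 !scaleN1r. Qed.
Lemma fNr x y : f x (- y) = - f x y.
Proof. by have := hf.2 (-1) x y 0; rewrite addr0 f0r addr0 !scaleN1r. Qed.
End Bil.

Theorem lemma2p1 (K : fieldType) (V U : lmodType K)
    (br2 : V -> V -> V) (br3 : V -> V -> V -> V)
    (iota : V -> U) (mul : U -> U -> U) (one : U)
    (Delta : U -> seq (U * U)) (eps : U -> K) :
  [pchar K] =i pred0 ->
  bol_algebra br2 br3 ->
  bol_enveloping br2 br3 iota mul one Delta eps ->
  forall a b : V, br2 a b = 0 ->
  derivation mul (fun x => mul (iota a) (mul (iota b) x) - mul (iota b) (mul (iota a) x)).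
Proof.
move=> _ _ [[[hm hone] _ _ _ _] [hlin _] [hprim _] [h2 _] hsw] a b hab.
have [hl hr] := hm.
have mDl := fDl hm; have mDr := fDr hm; have mNl := fNl hm; have mNr := fNr hm.
have i0 : iota 0 = 0.
  have := hlin 1 0 0; rewrite !scale1r addr0 => h.
  by have := congr1 (fun t => t - iota 0) h; rewrite subrr addrK.
set A := iota a; set B := iota b.
have hBA : mul B A = mul A B.
  have h := h2 a b; rewrite hab i0 in h.
  by apply/eqP; rewrite eq_sym -subr_eq0 -h.
have alt : forall P, (P = A \/ P = B) -> forall y z,
    mul P (mul y z) = mul (mul P y) z + mul (mul y P) z - mul y (mul P z).
  move=> P hP y z.
  have pP : primitive Delta one P.
    by apply/hprim; case: hP => ->; [exists a | exists b].
  have := hsw P y z.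
  rewrite (pP (fun p q => mul p (mul y (mul q z)))); last first.
    by split=> c x x' w; rewrite ?hl ?hr //.
  rewrite (pP (fun p q => mul (mul p (mul y q)) z)); last first.
    by split=> c x x' w; rewrite ?hl ?hr ?hl //.
  rewrite !(hone _).1 !(hone _).2 => h; rewrite -h.
  by rewrite addrK.
split.
  move=> c x y; rewrite !hr.
  rewrite scalerBr. zsolve.
move=> y z.
have e1 := alt B (or_intror erefl) y z.
have e2 := alt A (or_introl erefl) y z.
rewrite e1 e2 !(mDr, mNr).
rewrite (alt A (or_introl erefl) (mul B y) z) (alt A (or_introl erefl) (mul y B) z)
        (alt A (or_introl erefl) y (mul B z)).
rewrite (alt B (or_intror erefl) (mul A y) z) (alt B (or_intror erefl) (mul y A) z)
        (alt B (or_intror erefl) y (mul A z)).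
have f1 : mul (mul B y) A = mul B (mul y A) + mul y (mul B A) - mul (mul y B) A.
  rewrite (alt B (or_intror erefl) y A); zsolve.
have f2 : mul (mul A y) B = mul A (mul y B) + mul y (mul A B) - mul (mul y A) B.
  rewrite (alt A (or_introl erefl) y B); zsolve.
rewrite f1 f2 hBA !(mDl, mNl, mDr, mNr).
zsolve.
Qed.
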